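(* Let $G$ be a group and let $S \subset F$ be a set of weak identities in $G$. Then the $T$-subgroup $\langle S\rangle_T$ generated by $S$ is also a set of weak identities in $G$.
   Context: Let $F$ be the free group on countably many generators $g_1,g_2,\dots$. For $N\ge 1$, $F^{\times N}$ denotes the direct product of $N$ copies of $F$ and $i_k: F\to F^{\times N}$ the inclusion as the $k$-th factor. A subset $S\subset F$ is a set of weak identities in a group $G$ if there exists an integer $N\ge1$ such that for any elements $s_1,\dots,s_N\in S$ and any homomorphism $\rho: F^{\times N}\to G$ there is an index $k\in\{1,\dots,N\}$ with $\rho(i_k(s_k))=1$. A $T$-subgroup (verbal subgroup) of $F$ is a subgroup preserved by all endomorphisms of $F$; for $S\subset F$, $\langle S\rangle_T$ denotes the smallest $T$-subgroup of $F$ containing $S$. *)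

(* Defs.v *)
(* The free group F on countably many generators g_0, g_1, ...
   (the paper's g_1, g_2, ...) is built concretely as the set of freely reduced
   words; an arbitrary group G is a MathComp [groupType] (boot/monoid.v). *)
From mathcomp Require Import all_boot.
From mathcomp Require Import monoid.

Set Implicit Arguments.
Unset Strict Implicit.
Unset Printing Implicit Defensive.

(* A letter (i, b) stands for g_i if b = false and for g_i^-1 if b = true. *)
Definition letter := (nat * bool)%type.

Definition cancels (a b : letter) : bool := (a.1 == b.1) && (a.2 != b.2).

Definition reduced (w : seq letter) : bool :=
  sorted (fun a b => ~~ cancels a b) w.

Definition push (x : letter) (w : seq letter) : seq letter :=
  if w is y :: w' then (if cancels x y then w' else x :: w) else [:: x].

Lemma push_reduced x w : reduced w -> reduced (push x w).
Proof.
case: w => [|y w] //= H.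
case: ifP => C; first exact: path_sorted H.
by rewrite /reduced /= C.
Qed.

Definition reduce (w : seq letter) : seq letter := foldr push [::] w.

Lemma reduce_reduced w : reduced (reduce w).
Proof. by elim: w => [|x w IH] //=; apply: push_reduced. Qed.

Definition F := {w : seq letter | reduced w}.

Definition F1 : F := exist _ [::] (erefl true).

Definition Fmul (u v : F) : F :=
  exist _ (reduce (sval u ++ sval v)) (reduce_reduced _).

Definition Finv (u : F) : F :=
  exist _ (reduce (rev (map (fun a : letter => (a.1, ~~ a.2)) (sval u))))
          (reduce_reduced _).

Definition gen (i : nat) : F := exist _ [:: (i, false)] (erefl true).

Definition F_endo (f : F -> F) : Prop :=
  forall x y, f (Fmul x y) = Fmul (f x) (f y).

Definition Fprod (N : nat) := {ffun 'I_N -> F}.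

Definition Fprod_mul N (x y : Fprod N) : Fprod N := [ffun j => Fmul (x j) (y j)].

Definition incl N (k : 'I_N) (s : F) : Fprod N :=
  [ffun j => if j == k then s else F1].

Definition prod_hom (G : groupType) N (rho : Fprod N -> G) : Prop :=
  forall x y, rho (Fprod_mul x y) = (rho x * rho y)%g.

Definition weak_identities (G : groupType) (S : F -> Prop) : Prop :=
  exists N : nat, 1 <= N /\
    forall s : 'I_N -> F, (forall k, S (s k)) ->
    forall rho : Fprod N -> G, prod_hom rho ->
    exists k : 'I_N, rho (incl k (s k)) = 1%g.

Definition is_Tsubgroup (H : F -> Prop) : Prop :=
  [/\ H F1,
      (forall x y, H x -> H y -> H (Fmul x y)),
      (forall x, H x -> H (Finv x)) &
      (forall f, F_endo f -> forall x, H x -> H (f x))].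

Definition Tgen (S : F -> Prop) : F -> Prop :=
  fun x => forall H, is_Tsubgroup H -> (forall s, S s -> H s) -> H x.

(* Main.v *)
Require Import Defs.
From Stdlib Require Import Classical ClassicalEpsilon.
From mathcomp Require Import all_boot.
From mathcomp Require Import monoid.

Set Implicit Arguments.
Unset Strict Implicit.
Unset Printing Implicit Defensive.

Definition linv (a : letter) : letter := (a.1, ~~ a.2).

Lemma push_inv a w : reduced w -> push a (push (linv a) w) = w.
Proof.
case: w => [|y w] /=.
  by rewrite /cancels /linv /= eqxx; case: (a.2).
move=> Hr.
case: ifP => C.
- have ey : y = a.
    move: C; rewrite /cancels /linv /=; case: a y {Hr} => [i b] [j c] /=.
    by case/andP=> /eqP -> ; case: b; case: c.
  subst y.
  case: w Hr => [|z w] //= /andP [Hz _].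
  by rewrite (negbTE Hz).
- by rewrite /= /cancels /linv /= eqxx; case: (a.2).
Qed.

Lemma foldr_inv u w : reduced w ->
  foldr push w (u ++ rev (map linv u)) = w.
Proof.
elim: u w => [|a u IH] w Hw //=.
rewrite rev_cons -cats1 catA foldr_cat /=.
by rewrite IH ?push_inv // push_reduced.
Qed.

Lemma reduce_id w : reduced w -> reduce w = w.
Proof.
elim: w => [|a w IH] //= Hw.
have Hw' : reduced w by apply: path_sorted Hw.
rewrite IH //.
case: w Hw IH Hw' => [|b w] //= /andP [Hab _] _ _.
by rewrite (negbTE Hab).
Qed.

Lemma Fmul_inv x : Fmul x (Finv x) = F1.
Proof.
apply: val_inj => /=.
rewrite /reduce foldr_cat.
have -> : foldr push [::] (reduce (rev [seq (a.1, ~~ a.2) | a <- sval x]))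
   = reduce (rev [seq (a.1, ~~ a.2) | a <- sval x]).
  by apply: reduce_id; apply: reduce_reduced.
by rewrite -foldr_cat; apply: (foldr_inv (sval x) (w := [::])).
Qed.

Lemma Fmul1 x : Fmul x F1 = x.
Proof. by apply: val_inj => /=; rewrite cats0 reduce_id //; case: x. Qed.

Lemma F1mul x : Fmul F1 x = x.
Proof. by apply: val_inj => /=; rewrite reduce_id //; case: x. Qed.

Lemma FF1 : Fmul F1 F1 = F1.
Proof. exact: F1mul. Qed.

Lemma incl_mul N (k : 'I_N) a b :
  incl k (Fmul a b) = Fprod_mul (incl k a) (incl k b).
Proof.
by apply/ffunP => j; rewrite !ffunE; case: (j == k); rewrite ?FF1.
Qed.

Lemma idem_one (G : groupType) (z : G) : z = (z * z)%g -> z = 1%g.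
Proof. by move=> H; apply: (@mulgI _ z); rewrite mulg1. Qed.

Lemma rho_idem (G : groupType) N (rho : Fprod N -> G) (w : Fprod N) :
  prod_hom rho -> Fprod_mul w w = w -> rho w = 1%g.
Proof. by move=> Hr Hw; apply: idem_one; rewrite -Hr Hw. Qed.

Theorem theorem2p5 (G : groupType) (S : F -> Prop) :
  weak_identities G S -> weak_identities G (Tgen S).
Proof.
case=> N [HN HS]; exists N; split => // x Hx rho Hrho.
apply: NNPP => Hno.
have Hk : forall k : 'I_N, exists p : F * (F -> F),
    [/\ S p.1, F_endo p.2 & rho (incl k (p.2 p.1)) <> 1%g].
  move=> k; apply: NNPP => Hn.
  have Hc : forall s, S s -> forall f, F_endo f -> rho (incl k (f s)) = 1%g.
    move=> s Ss f Hf; apply: NNPP => Hr; apply: Hn; exists (s, f); by split.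
  pose H := fun y => forall f, F_endo f -> rho (incl k (f y)) = 1%g.
  have : H (x k).
    apply: Hx; last first.
      by move=> s Ss f Hf; apply: Hc.
    split.
    - move=> f Hf; apply: rho_idem => //.
      by rewrite -incl_mul -Hf FF1.
    - by move=> y z Hy Hz f Hf; rewrite Hf incl_mul Hrho Hy // Hz // mulg1.
    - move=> y Hy f Hf.
      have := congr1 (fun z => rho (incl k z)) (Hf y (Finv y)).
      rewrite /= Fmul_inv incl_mul Hrho Hy //.
      have -> : rho (incl k (f F1)) = 1%g.
        by apply: rho_idem => //; rewrite -incl_mul -Hf FF1.
      by rewrite mul1g => <-.
    - move=> g Hg y Hy f Hf; apply: (Hy (fun z => f (g z))).
      by move=> a b; rewrite Hg Hf.
  move=> Hxk; apply: Hno; exists k; apply: (Hxk id) => //.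
pose p := fun k => proj1_sig (constructive_indefinite_description _ (Hk k)).
have Hp : forall k, [/\ S (p k).1, F_endo (p k).2 &
                     rho (incl k ((p k).2 (p k).1)) <> 1%g].
  by move=> k; rewrite /p; case: constructive_indefinite_description.
pose rho' := fun y : Fprod N => rho [ffun j => (p j).2 (y j)].
have Hrho' : prod_hom rho'.
  move=> y z; rewrite /rho' -Hrho; congr rho; apply/ffunP => j.
  by rewrite !ffunE; case: (Hp j) => _ He _; rewrite He.
have [k Hk0] := HS (fun k => (p k).1) (fun k => let: And3 h _ _ := Hp k in h)
                 rho' Hrho'.
case: (Hp k) => _ _; apply.
pose w : Fprod N := [ffun j => if j == k then F1 else (p j).2 F1].
have Hw : rho w = 1%g.
  apply: rho_idem => //; apply/ffunP => j; rewrite !ffunE.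
  case: (j == k); first exact: FF1.
  by case: (Hp j) => _ He _; rewrite -He FF1.
rewrite -Hk0 -[rho (incl _ _)]mulg1 -Hw -Hrho /rho'; congr rho.
apply/ffunP => j; rewrite !ffunE.
case: eqP => [->|_]; first by rewrite Fmul1.
by rewrite F1mul.
Qed.
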